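(* Let $\alpha,\beta,\gamma$ be partitions with $\alpha_1\le 2$ such that $\beta'_i\le\gamma'_i+1$ for all $i\ge 1$ (i.e. $\beta\setminus\gamma$ is a vertical strip). Then in the poset $(\mathcal D_{\alpha,\gamma}^\beta,\le_{\rm arc})$ all saturated chains have the same length.
   Context: For a partition $\lambda$, $\lambda'$ denotes the conjugate partition. Let $\alpha_1\le 2$, so $\alpha'=(\alpha'_1,\alpha'_2)$. Place the positive integers on a horizontal line in decreasing order from left to right. An arc is a pair $(m,n)$ of positive integers with $m>n$ (source $m$, target $n$), drawn as an upper semicircle joining $m$ and $n$; a pole at $n$ is a vertical half-line starting at $n$, regarded as an arc $(\infty,n)$ with source $\infty$ (larger than every integer). An arc diagram of type $(\alpha,\beta,\gamma)$ is a finite multiset of $\alpha'_2$ arcs and $\alpha'_1-\alpha'_2$ poles such that for each $i\ge1$ the number of arcs and poles having $i$ as source or target equals $\beta'_i-\gamma'_i$. $\mathcal D_{\alpha,\gamma}^\beta$ is the set of these. Two members $(m,n),(k,r)$ (arcs or poles) cross iff $r<n<k<m$ or $n<r<m<k$; $x(\Delta)$ is the number of crossing pairs of members of $\Delta$ (counted with multiplicity). Moves: for $a>b>c>d$, (A) replaces arcs $(a,c),(b,d)$ by $(a,d),(b,c)$; (C) replaces arcs $(a,c),(b,d)$ by $(a,b),(c,d)$; for $a>b>c$, (B) replaces arc $(a,c)$ and pole $(\infty,b)$ by arc $(a,b)$ and pole $(\infty,c)$; (D) replaces arc $(a,c)$ and pole $(\infty,b)$ by arc $(b,c)$ and pole $(\infty,a)$;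 all other members stay unchanged. $\Delta\le_{\rm arc}\Delta'$ iff $\Delta$ is obtained from $\Delta'$ by a finite (possibly empty) sequence of such moves. A chain in a poset is saturated if it has no refinement, i.e. it is not properly contained in any other chain of the poset. *)

(* Defs.v *)
From Stdlib Require Import Relations.
From mathcomp Require Import all_boot.
From mathcomp Require Import finmap multiset.

Set Implicit Arguments.
Unset Strict Implicit.
Unset Printing Implicit Defensive.

Definition is_partition (l : seq nat) : Prop :=
  sorted geq l /\ all (fun x => 0 < x) l.

Definition conj (l : seq nat) (i : nat) : nat := count (fun x => i <= x) l.

(* A member of an arc diagram: (source, target); source None stands for oo,
   i.e. (None, n) is the pole at n, (Some m, n) is the arc (m, n). *)
Definition member := (option nat * nat)%type.

Definition is_arc (e : member) : bool :=
  if e.1 is Some m then (0 < e.2) && (e.2 < m) else false.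
Definition is_pole (e : member) : bool :=
  if e.1 is None then 0 < e.2 else false.

Definition touches (i : nat) (e : member) : bool :=
  (e.1 == Some i) || (e.2 == i).

Definition diagram := multiset member.

(* membership in D^beta_{alpha,gamma}; multiplicities are counted via the
   coercion of a multiset to the sequence of its elements with repetition *)
Definition in_D (al be ga : seq nat) (D : diagram) : Prop :=
  all (fun e => is_arc e || is_pole e) (enum_mset D) /\
  count is_arc (enum_mset D) = conj al 2 /\
  count is_pole (enum_mset D) = conj al 1 - conj al 2 /\
  (forall i, 0 < i -> count (touches i) (enum_mset D) + conj ga i = conj be i).

Definition madd2 (R : diagram) (x y : member) : diagram :=
  msetD R (msetD (msetn 1 x) (msetn 1 y)).

Definition one_move (D' D : diagram) : Prop :=
  exists (R : diagram) (a b c d : nat),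
    [\/ [/\ 0 < d < c, c < b < a,
            D' = madd2 R (Some a, c) (Some b, d) &
            D = madd2 R (Some a, d) (Some b, c)],
        [/\ 0 < c < b, b < a,
            D' = madd2 R (Some a, c) (None, b) &
            D = madd2 R (Some a, b) (None, c)],
        [/\ 0 < d < c, c < b < a,
            D' = madd2 R (Some a, c) (Some b, d) &
            D = madd2 R (Some a, b) (Some c, d)] |
        [/\ 0 < c < b, b < a,
            D' = madd2 R (Some a, c) (None, b) &
            D = madd2 R (Some b, c) (None, a)]].

Definition le_arc (D D' : diagram) : Prop :=
  clos_refl_trans diagram one_move D' D.

(* A chain of the poset (D^beta_{alpha,gamma}, <=_arc), listed without
   repetition as a sequence (every chain is finite since the poset is). *)
Definition is_chain (al be ga : seq nat) (s : seq diagram) : Prop :=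
  uniq s /\ (forall D, D \in s -> in_D al be ga D) /\
  (forall D E, D \in s -> E \in s -> le_arc D E \/ le_arc E D).

Definition saturated_chain (al be ga : seq nat) (s : seq diagram) : Prop :=
  is_chain al be ga s /\
  (forall t, is_chain al be ga t -> {subset s <= t} -> {subset t <= s}).

(* Main.v *)
Require Import Defs.
From Stdlib Require Import Relations.
From mathcomp Require Import all_boot.
From mathcomp Require Import finmap multiset.
From mathcomp Require Import zify.

Set Implicit Arguments.
Unset Strict Implicit.
Unset Printing Implicit Defensive.


Definition cr (e f : member) : bool :=
  match e.1, f.1 with
  | Some m, Some k => ((f.2 < e.2) && (e.2 < k) && (k < m)) || ((e.2 < f.2) && (f.2 < m) && (m < k))
  | Some m, None => (e.2 < f.2) && (f.2 < m)
  | None, Some k => (f.2 < e.2) && (e.2 < k)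
  | None, None => false
  end.

Lemma crC e f : cr e f = cr f e.
Proof.
case: e => [[m|] n]; case: f => [[k|] r] //=.
by rewrite /cr /= orbC.
Qed.

Lemma cr_irr e : cr e e = false.
Proof. case: e => [[m|] n]; rewrite /cr /= //; apply/negbTE; lia. Qed.

Fixpoint Xs (l : seq member) : nat :=
  if l is e :: l' then count (cr e) l' + Xs l' else 0.

Lemma Xs_sum l : 2 * Xs l = \sum_(e <- l) count (cr e) l.
Proof.
elim: l => [|e l IH]; first by rewrite big_nil.
rewrite big_cons /= cr_irr add0n.
have -> : \sum_(f <- l) count (cr f) (e :: l) = count (cr e) l + \sum_(f <- l) count (cr f) l.
  rewrite /= big_split /=; congr (_ + _).
  rewrite -sum1_count [in RHS]big_mkcond /=.
  by apply: eq_bigr => f _; rewrite crC; case: (cr e f).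
lia.
Qed.

Lemma Xs_perm l l' : perm_eq l l' -> Xs l = Xs l'.
Proof.
move=> pl.
have : 2 * Xs l = 2 * Xs l'.
  rewrite !Xs_sum (perm_big _ pl) /=.
  by apply: eq_bigr => e _; apply: (permP pl).
lia.
Qed.

Lemma enum_madd2 (R : diagram) x y :
  perm_eq (enum_mset (madd2 R x y)) (x :: y :: enum_mset R).
Proof.
apply/allP => z _ /=; rewrite count_mem_mset /madd2 !msetE2 !msetnE count_mem_mset.
by apply/eqP; rewrite !(eq_sym _ z); case: (z == x); case: (z == y) => /=; lia.
Qed.

Definition rk (D : diagram) := Xs (enum_mset D).

Lemma enum_madd2' (R : diagram) x y :
  perm_eq (x :: y :: enum_mset R) (enum_mset (madd2 R x y)).
Proof. by rewrite perm_sym; apply: enum_madd2. Qed.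


Ltac decide_cmp :=
  repeat match goal with
  | |- context [leq ?x ?y] =>
      first [ rewrite (_ : leq x y = true); [|by apply/idP; lia]
            | rewrite (_ : leq x y = false); [|by apply/negbTE/negP; lia] ]
  | |- context [?x == ?y] =>
      lazymatch type of x with nat => idtac end;
      first [ rewrite (_ : (x == y) = true); [|by apply/eqP; lia]
            | rewrite (_ : (x == y) = false); [|by apply/negbTE/eqP; lia] ]
  end.

Definition adm (x y e : member) : Prop :=
  (is_arc e || is_pole e) /\ forall i, touches i e -> ~~ touches i x && ~~ touches i y.

Lemma SomeE (a b : nat) : (Some a == Some b) = (a == b).
Proof. by []. Qed.

Lemma adm_arc (x y : member) m n : adm x y (Some m, n) ->
  [/\ 0 < n, n < m, ~~ touches n x && ~~ touches n y & ~~ touches m x && ~~ touches m y].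
Proof.
move=> [/orP[/andP[h1 h2]|//] H]; split => //.
  by apply: H; rewrite /touches eqxx orbT.
by apply: H; rewrite /touches eqxx.
Qed.

Lemma adm_pole (x y : member) n : adm x y (None, n) ->
  0 < n /\ ~~ touches n x && ~~ touches n y.
Proof.
move=> [/orP[//|h1] H]; split => //.
by apply: H; rewrite /touches eqxx orbT.
Qed.

Ltac split5 z d c b a :=
  have [?|[?|[?|[?|?]]]] : z < d \/ (d < z < c) \/ (c < z < b) \/ (b < z < a) \/ a < z by lia.

Lemma ineqA a b c d e : 0 < d < c -> c < b < a -> adm (Some a, c) (Some b, d) e ->
  cr (Some a, d) e + cr (Some b, c) e <= cr (Some a, c) e + cr (Some b, d) e /\
  (cr (Some a, d) e + cr (Some b, c) e < cr (Some a, c) e + cr (Some b, d) e ->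
   exists m n, e = (Some m, n) /\ d < n < c /\ b < m < a).
Proof.
move=> h1 h2; case: e => [[m|] n] /= H.
  case/adm_arc: H => h3 h4; rewrite /touches /= !SomeE => h5 h6.
  rewrite /cr /=.
  split5 n d c b a; split5 m d c b a; decide_cmp; split=> // _; by exists m, n; split => //; lia.
case/adm_pole: H => h3; rewrite /touches /= !SomeE => h5.
rewrite /cr /=.
split5 n d c b a; decide_cmp; done.
Qed.

Lemma ineqC a b c d e : 0 < d < c -> c < b < a -> adm (Some a, c) (Some b, d) e ->
  cr (Some a, b) e + cr (Some c, d) e <= cr (Some a, c) e + cr (Some b, d) e /\
  (cr (Some a, b) e + cr (Some c, d) e < cr (Some a, c) e + cr (Some b, d) e ->
   (exists m n, e = (Some m, n) /\ ((n < d /\ c < m < b) \/ (c < n < b /\ a < m))) \/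
   (exists n, e = (None, n) /\ c < n < b)).
Proof.
move=> h1 h2; case: e => [[m|] n] /= H.
  case/adm_arc: H => h3 h4; rewrite /touches /= !SomeE => h5 h6.
  rewrite /cr /=.
  split5 n d c b a; split5 m d c b a; decide_cmp; split=> // _; left; by exists m, n; split => //; lia.
case/adm_pole: H => h3; rewrite /touches /= !SomeE => h5.
rewrite /cr /=.
split5 n d c b a; decide_cmp; split=> // _; right; by exists n; split => //; lia.
Qed.

Ltac split4 z c b a :=
  have [?|[?|[?|?]]] : z < c \/ (c < z < b) \/ (b < z < a) \/ a < z by lia.

Lemma ineqB a b c e : 0 < c < b -> b < a -> adm (Some a, c) (None, b) e ->
  cr (Some a, b) e + cr (None, c) e <= cr (Some a, c) e + cr (None, b) e /\
  (cr (Some a, b) e + cr (None, c) e < cr (Some a, c) e + cr (None, b) e ->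
   (exists m n, e = (Some m, n) /\ c < n < b /\ a < m) \/
   (exists n, e = (None, n) /\ c < n < b)).
Proof.
move=> h1 h2; case: e => [[m|] n] /= H.
  case/adm_arc: H => h3 h4; rewrite /touches /= !SomeE => h5 h6.
  rewrite /cr /=.
  split4 n c b a; split4 m c b a; decide_cmp; split=> // _; left; by exists m, n; split => //; lia.
case/adm_pole: H => h3; rewrite /touches /= !SomeE => h5.
rewrite /cr /=.
split4 n c b a; decide_cmp; split=> // _; right; by exists n; split => //; lia.
Qed.

Lemma ineqD a b c e : 0 < c < b -> b < a -> adm (Some a, c) (None, b) e ->
  cr (Some b, c) e + cr (None, a) e <= cr (Some a, c) e + cr (None, b) e /\
  (cr (Some b, c) e + cr (None, a) e < cr (Some a, c) e + cr (None, b) e ->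
   (exists m n, e = (Some m, n) /\ n < c /\ b < m < a) \/
   (exists n, e = (None, n) /\ b < n < a)).
Proof.
move=> h1 h2; case: e => [[m|] n] /= H.
  case/adm_arc: H => h3 h4; rewrite /touches /= !SomeE => h5 h6.
  rewrite /cr /=.
  split4 n c b a; split4 m c b a; decide_cmp; split=> // _; left; by exists m, n; split => //; lia.
case/adm_pole: H => h3; rewrite /touches /= !SomeE => h5.
rewrite /cr /=.
split4 n c b a; decide_cmp; split=> // _; right; by exists n; split => //; lia.
Qed.


Definition valid (l : seq member) : Prop :=
  all (fun e => is_arc e || is_pole e) l /\
  forall i, 0 < i -> count (touches i) l <= 1.

Lemma valid_perm l l' : perm_eq l l' -> valid l -> valid l'.
Proof.
move=> pl [h1 h2]; split.
  by apply/allP => e; rewrite -(perm_mem pl); move/allP: h1; apply.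
by move=> i hi; rewrite -(permP pl); apply: h2.
Qed.

Lemma count2_le (p q p' q' : pred member) l :
  (forall e, e \in l -> p' e + q' e <= p e + q e) ->
  count p' l + count q' l <= count p l + count q l /\
  (count p' l + count q' l < count p l + count q l ->
     exists2 e, e \in l & p' e + q' e < p e + q e).
Proof.
elim: l => [|e l IH] H //=.
have [IH1 IH2] : count p' l + count q' l <= count p l + count q l /\
  (count p' l + count q' l < count p l + count q l ->
     exists2 e, e \in l & p' e + q' e < p e + q e).
  by apply: IH => f hf; apply: H; rewrite inE hf orbT.
have He := H e (mem_head _ _).
split; first lia.
move=> hlt.
case: (ltnP (p' e + q' e) (p e + q e)) => hh.
  by exists e; rewrite ?mem_head.
have [f hf1 hf2] : exists2 f, f \in l & p' f + q' f < p f + q f by apply: IH2; lia.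
by exists f; rewrite // inE hf1 orbT.
Qed.

Lemma touches_pos e i : is_arc e || is_pole e -> touches i e -> 0 < i.
Proof.
case: e => [[m|] n]; rewrite /is_arc /is_pole /touches /= ?SomeE.
  by case/andP => h1 h2 /orP[/eqP<-|/eqP<-]; lia.
by move=> h /eqP<-.
Qed.

Lemma valid_adm x y l e : valid (x :: y :: l) -> e \in l -> adm x y e.
Proof.
move=> [h1 h2] el.
have ve : is_arc e || is_pole e by move/allP: h1; apply; rewrite !inE el !orbT.
split => // i ti.
have i0 := touches_pos ve ti.
have := h2 i i0; rewrite /=.
have : 0 < count (touches i) l by rewrite -has_count; apply/hasP; exists e.
by case: (touches i x); case: (touches i y) => /=; lia.
Qed.

Lemma rk_madd2 R x y :
  rk (madd2 R x y) = cr x y + (count (cr x) (enum_mset R) + count (cr y) (enum_mset R)) + Xs (enum_mset R).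
Proof. rewrite /rk (Xs_perm (enum_madd2 R x y)) /=; lia. Qed.

Lemma drop_generic R x y x' y' :
  cr x y -> ~~ cr x' y' ->
  valid (x :: y :: enum_mset R) ->
  (forall e, adm x y e -> cr x' e + cr y' e <= cr x e + cr y e) ->
  rk (madd2 R x' y') < rk (madd2 R x y) /\
  (rk (madd2 R x' y') + 1 < rk (madd2 R x y) ->
     exists2 e, e \in enum_mset R & adm x y e /\ cr x' e + cr y' e < cr x e + cr y e).
Proof.
move=> cxy ncxy V H.
have H' : forall e, e \in enum_mset R -> cr x' e + cr y' e <= cr x e + cr y e.
  by move=> e he; apply: H; apply: valid_adm V he.
have [c1 c2] := count2_le H'.
rewrite !rk_madd2 cxy (negbTE ncxy) /=.
move: c1 c2; set u1 := count (cr x') _; set u2 := count (cr y') _; set u3 := count (cr x) _; set u4 := count (cr y) _ => c1 c2.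
split; first lia.
move=> hlt; have [e he1 he2] := c2 ltac:(lia).
by exists e => //; split => //; apply: valid_adm V he1.
Qed.


Definition madd3 (R : diagram) x y z := madd2 (msetD R (msetn 1 z)) x y.

Lemma madd3E R x y z w : madd3 R x y z w = R w + (w == x) + (w == y) + (w == z).
Proof.
rewrite /madd3 /madd2 !msetE2 !msetnE.
by case: (w == x); case: (w == y); case: (w == z) => /=; lia.
Qed.

Ltac m3eq := apply/msetP => ?; rewrite !madd3E; lia.

Definition bm (x y x' y' : member) : Prop :=
  exists a b c d : nat,
    [\/ [/\ 0 < d < c, c < b < a, (x, y) = ((Some a, c), (Some b, d)) &
            (x', y') = ((Some a, d), (Some b, c))],
        [/\ 0 < c < b, b < a, (x, y) = ((Some a, c), (@None nat, b)) &
            (x', y') = ((Some a, b), (@None nat, c))],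
        [/\ 0 < d < c, c < b < a, (x, y) = ((Some a, c), (Some b, d)) &
            (x', y') = ((Some a, b), (Some c, d))] |
        [/\ 0 < c < b, b < a, (x, y) = ((Some a, c), (@None nat, b)) &
            (x', y') = ((Some b, c), (@None nat, a))]].

Lemma bm_move R x y x' y' : bm x y x' y' -> one_move (madd2 R x y) (madd2 R x' y').
Proof.
case=> a [b [c [d H]]]; exists R, a, b, c, d.
case: H => [[h1 h2 [-> ->] [-> ->]]|[h1 h2 [-> ->] [-> ->]]|[h1 h2 [-> ->] [-> ->]]|[h1 h2 [-> ->] [-> ->]]].
- by apply: Or41.
- by apply: Or42.
- by apply: Or43.
- by apply: Or44.
Qed.

Lemma bmA a b c d : 0 < d < c -> c < b < a -> bm (Some a, c) (Some b, d) (Some a, d) (Some b, c).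
Proof. by move=> h1 h2; exists a, b, c, d; apply: Or41. Qed.
Lemma bmB a b c : 0 < c < b -> b < a -> bm (Some a, c) (@None nat, b) (Some a, b) (@None nat, c).
Proof. by move=> h1 h2; exists a, b, c, 0; apply: Or42. Qed.
Lemma bmC a b c d : 0 < d < c -> c < b < a -> bm (Some a, c) (Some b, d) (Some a, b) (Some c, d).
Proof. by move=> h1 h2; exists a, b, c, d; apply: Or43. Qed.
Lemma bmD a b c : 0 < c < b -> b < a -> bm (Some a, c) (@None nat, b) (Some b, c) (@None nat, a).
Proof. by move=> h1 h2; exists a, b, c, 0; apply: Or44. Qed.

Lemma step3 R0 x y z x' y' z' u v w u' v' :
  bm u v u' v' -> madd3 R0 x y z = madd3 R0 u v w -> madd3 R0 x' y' z' = madd3 R0 u' v' w ->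
  one_move (madd3 R0 x y z) (madd3 R0 x' y' z').
Proof. by move=> H -> ->; apply: bm_move. Qed.

Definition Route (D' D : diagram) := exists E, one_move D' E /\ clos_trans diagram one_move E D.

Lemma routeA R0 a b c d m n : 0 < d -> d < n -> n < c -> c < b -> b < m -> m < a ->
  Route (madd3 R0 (Some a, c) (Some b, d) (Some m, n)) (madd3 R0 (Some a, d) (Some b, c) (Some m, n)).
Proof.
move=> *.
exists (madd3 R0 (Some a, n) (Some m, c) (Some b, d)); split.
  apply: (@step3 _ _ _ _ _ _ _ (Some a, c) (Some m, n) (Some b, d)); [apply: bmA; lia|m3eq|m3eq].
apply: (t_trans _ _ _ (madd3 R0 (Some m, d) (Some b, c) (Some a, n))); apply: t_step.
  apply: (@step3 _ _ _ _ _ _ _ (Some m, c) (Some b, d) (Some a, n)); [apply: bmA; lia|m3eq|m3eq].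
apply: (@step3 _ _ _ _ _ _ _ (Some a, n) (Some m, d) (Some b, c)); [apply: bmA; lia|m3eq|m3eq].
Qed.

Ltac stp u v w bmX := apply: (@step3 _ _ _ _ _ _ _ u v w); [apply: bmX; lia|m3eq|m3eq].

Lemma routeC1 R0 a b c d m n : 0 < n -> n < d -> d < c -> c < m -> m < b -> b < a ->
  Route (madd3 R0 (Some a, c) (Some b, d) (Some m, n)) (madd3 R0 (Some a, b) (Some c, d) (Some m, n)).
Proof.
move=> *.
exists (madd3 R0 (Some b, n) (Some m, d) (Some a, c)); split.
  stp (Some b, d) (Some m, n) (Some a, c) bmA.
apply: (t_trans _ _ _ (madd3 R0 (Some a, b) (Some c, n) (Some m, d))); apply: t_step.
  stp (Some a, c) (Some b, n) (Some m, d) bmC.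
stp (Some m, d) (Some c, n) (Some a, b) bmA.
Qed.

Lemma routeC2 R0 a b c d m n : 0 < d -> d < c -> c < n -> n < b -> b < a -> a < m ->
  Route (madd3 R0 (Some a, c) (Some b, d) (Some m, n)) (madd3 R0 (Some a, b) (Some c, d) (Some m, n)).
Proof.
move=> *.
exists (madd3 R0 (Some m, c) (Some a, n) (Some b, d)); split.
  stp (Some m, n) (Some a, c) (Some b, d) bmA.
apply: (t_trans _ _ _ (madd3 R0 (Some m, b) (Some c, d) (Some a, n))); apply: t_step.
  stp (Some m, c) (Some b, d) (Some a, n) bmC.
stp (Some m, b) (Some a, n) (Some c, d) bmA.
Qed.

Lemma routeCp R0 a b c d n : 0 < d -> d < c -> c < n -> n < b -> b < a ->
  Route (madd3 R0 (Some a, c) (Some b, d) (@None nat, n)) (madd3 R0 (Some a, b) (Some c, d) (@None nat, n)).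
Proof.
move=> *.
exists (madd3 R0 (Some a, n) (@None nat, c) (Some b, d)); split.
  stp (Some a, c) (@None nat, n) (Some b, d) bmB.
apply: (t_trans _ _ _ (madd3 R0 (Some a, b) (Some n, d) (@None nat, c))); apply: t_step.
  stp (Some a, n) (Some b, d) (@None nat, c) bmC.
stp (Some n, d) (@None nat, c) (Some a, b) bmD.
Qed.

Lemma routeBa R0 a b c m n : 0 < c -> c < n -> n < b -> b < a -> a < m ->
  Route (madd3 R0 (Some a, c) (@None nat, b) (Some m, n)) (madd3 R0 (Some a, b) (@None nat, c) (Some m, n)).
Proof.
move=> *.
exists (madd3 R0 (Some m, c) (Some a, n) (@None nat, b)); split.
  stp (Some m, n) (Some a, c) (@None nat, b) bmA.
apply: (t_trans _ _ _ (madd3 R0 (Some m, b) (@None nat, c) (Some a, n))); apply: t_step.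
  stp (Some m, c) (@None nat, b) (Some a, n) bmB.
stp (Some m, b) (Some a, n) (@None nat, c) bmA.
Qed.

Lemma routeBp R0 a b c n : 0 < c -> c < n -> n < b -> b < a ->
  Route (madd3 R0 (Some a, c) (@None nat, b) (@None nat, n)) (madd3 R0 (Some a, b) (@None nat, c) (@None nat, n)).
Proof.
move=> *.
exists (madd3 R0 (Some a, n) (@None nat, c) (@None nat, b)); split.
  stp (Some a, c) (@None nat, n) (@None nat, b) bmB.
apply: t_step.
stp (Some a, n) (@None nat, b) (@None nat, c) bmB.
Qed.

Lemma routeDa R0 a b c m n : 0 < n -> n < c -> c < b -> b < m -> m < a ->
  Route (madd3 R0 (Some a, c) (@None nat, b) (Some m, n)) (madd3 R0 (Some b, c) (@None nat, a) (Some m, n)).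
Proof.
move=> *.
exists (madd3 R0 (Some a, n) (Some m, c) (@None nat, b)); split.
  stp (Some a, c) (Some m, n) (@None nat, b) bmA.
apply: (t_trans _ _ _ (madd3 R0 (Some b, c) (@None nat, m) (Some a, n))); apply: t_step.
  stp (Some m, c) (@None nat, b) (Some a, n) bmD.
stp (Some a, n) (@None nat, m) (Some b, c) bmD.
Qed.

Lemma routeDp R0 a b c n : 0 < c -> c < b -> b < n -> n < a ->
  Route (madd3 R0 (Some a, c) (@None nat, b) (@None nat, n)) (madd3 R0 (Some b, c) (@None nat, a) (@None nat, n)).
Proof.
move=> *.
exists (madd3 R0 (Some n, c) (@None nat, a) (@None nat, b)); split.
  stp (Some a, c) (@None nat, n) (@None nat, b) bmD.
apply: t_step.
stp (Some n, c) (@None nat, b) (@None nat, a) bmD.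
Qed.



Lemma split_R (R : diagram) e : e \in enum_mset R -> exists R0, R = msetD R0 (msetn 1 e).
Proof.
move=> he; exists (msetB R (msetn 1 e)).
by rewrite msetDC msetB1K.
Qed.

Lemma move_drop D' D : valid (enum_mset D') -> one_move D' D ->
  rk D < rk D' /\ (rk D + 1 < rk D' -> Route D' D).
Proof.
move=> V [R [a [b [c [d []]]]]].
- move=> [h1 h2 HD1 HD2]; subst D' D.
  have V' := valid_perm (enum_madd2 R _ _) V.
  have [] := drop_generic (x := (Some a, c)) (y := (Some b, d)) (x' := (Some a, d)) (y' := (Some b, c)) _ _ V'.
  + by rewrite /cr /=; decide_cmp.
  + by rewrite /cr /=; decide_cmp.
  + by move=> e he; case: (ineqA h1 h2 he).
  move=> r1 r2; split => // /r2 [e he [ae se]].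
  have [_ /(_ se) [m [n [Ee [hn hm]]]]] := ineqA h1 h2 ae.
  have [R0 ->] := split_R he.
  by subst e; apply: routeA; lia.
- move=> [h1 h2 HD1 HD2]; subst D' D.
  have V' := valid_perm (enum_madd2 R _ _) V.
  have [] := drop_generic (x := (Some a, c)) (y := (None, b)) (x' := (Some a, b)) (y' := (None, c)) _ _ V'.
  + by rewrite /cr /=; decide_cmp.
  + by rewrite /cr /=; decide_cmp.
  + by move=> e he; case: (ineqB h1 h2 he).
  move=> r1 r2; split => // /r2 [e he [ae se]].
  have [R0 ->] := split_R he.
  have [_ /(_ se) [[m [n [Ee [hn hm]]]]|[n [Ee hn]]]] := ineqB h1 h2 ae.
    by subst e; apply: routeBa; lia.
  by subst e; apply: routeBp; lia.
- move=> [h1 h2 HD1 HD2]; subst D' D.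
  have V' := valid_perm (enum_madd2 R _ _) V.
  have [] := drop_generic (x := (Some a, c)) (y := (Some b, d)) (x' := (Some a, b)) (y' := (Some c, d)) _ _ V'.
  + by rewrite /cr /=; decide_cmp.
  + by rewrite /cr /=; decide_cmp.
  + by move=> e he; case: (ineqC h1 h2 he).
  move=> r1 r2; split => // /r2 [e he [ae se]].
  have [R0 ->] := split_R he.
  have [_ /(_ se) [[m [n [Ee [[hn hm]|[hn hm]]]]]|[n [Ee hn]]]] := ineqC h1 h2 ae.
  + by subst e; case/adm_arc: ae => n0 _ _ _; apply: routeC1; lia.
  + by subst e; apply: routeC2; lia.
  by subst e; apply: routeCp; lia.
- move=> [h1 h2 HD1 HD2]; subst D' D.
  have V' := valid_perm (enum_madd2 R _ _) V.
  have [] := drop_generic (x := (Some a, c)) (y := (None, b)) (x' := (Some b, c)) (y' := (None, a)) _ _ V'.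
  + by rewrite /cr /=; decide_cmp.
  + by rewrite /cr /=; decide_cmp.
  + by move=> e he; case: (ineqD h1 h2 he).
  move=> r1 r2; split => // /r2 [e he [ae se]].
  have [R0 ->] := split_R he.
  have [_ /(_ se) [[m [n [Ee [hn hm]]]]|[n [Ee hn]]]] := ineqD h1 h2 ae.
    by subst e; case/adm_arc: ae => n0 _ _ _; apply: routeDa; lia.
  by subst e; apply: routeDp; lia.
Qed.


Definition inDs (al be ga : seq nat) (l : seq member) : Prop :=
  all (fun e => is_arc e || is_pole e) l /\
  count is_arc l = conj al 2 /\
  count is_pole l = conj al 1 - conj al 2 /\
  (forall i, 0 < i -> count (touches i) l + conj ga i = conj be i).

Lemma inDs_perm al be ga l l' : perm_eq l l' -> inDs al be ga l -> inDs al be ga l'.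
Proof.
move=> pl [h1 [h2 [h3 h4]]]; split; last split; last split.
- by apply/allP => e; rewrite -(perm_mem pl); move/allP: h1; apply.
- by rewrite -(permP pl).
- by rewrite -(permP pl).
- by move=> i hi; rewrite -(permP pl); apply: h4.
Qed.

Lemma inD_inDs al be ga D : in_D al be ga D <-> inDs al be ga (enum_mset D).
Proof. by []. Qed.

Lemma swap_inDs al be ga x y x' y' l :
  (is_arc x || is_pole x) -> (is_arc y || is_pole y) ->
  (is_arc x' || is_pole x') -> (is_arc y' || is_pole y') ->
  is_arc x + is_arc y = is_arc x' + is_arc y' ->
  is_pole x + is_pole y = is_pole x' + is_pole y' ->
  (forall i, touches i x + touches i y = touches i x' + touches i y') ->
  inDs al be ga (x :: y :: l) -> inDs al be ga (x' :: y' :: l).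
Proof.
move=> vx vy vx' vy' ea ep et [h1 [h2 [h3 h4]]]; split; last split; last split.
- by move: h1; rewrite /= vx vy vx' vy'.
- by move: h2 => /=; lia.
- by move: h3 => /=; lia.
- by move=> i hi; move: (h4 i hi) (et i) => /=; lia.
Qed.

Lemma b2n_or (p q : bool) : ~~ (p && q) -> ((p || q) : nat) = p + q.
Proof. by case: p; case: q. Qed.

Lemma tch_arc i m n : n < m -> touches i (Some m, n) = (m == i) + (n == i) :> nat.
Proof.
move=> h; rewrite /touches /= SomeE b2n_or //.
by apply/negP => /andP[/eqP e1 /eqP e2]; lia.
Qed.

Lemma tch_pole i n : touches i (None, n) = (n == i) :> nat.
Proof. by []. Qed.

Lemma move_inD al be ga D' D : one_move D' D -> (in_D al be ga D' <-> in_D al be ga D).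
Proof.
move=> [R [a [b [c [d H]]]]].
have key : forall x y x' y', D' = madd2 R x y -> D = madd2 R x' y' ->
  (is_arc x || is_pole x) -> (is_arc y || is_pole y) ->
  (is_arc x' || is_pole x') -> (is_arc y' || is_pole y') ->
  is_arc x + is_arc y = is_arc x' + is_arc y' ->
  is_pole x + is_pole y = is_pole x' + is_pole y' ->
  (forall i, touches i x + touches i y = touches i x' + touches i y') ->
  (in_D al be ga D' <-> in_D al be ga D).
  move=> x y x' y' -> -> v1 v2 v3 v4 ea ep et; rewrite !inD_inDs; split => h.
    apply: (inDs_perm (enum_madd2' R x' y')).
    apply: (swap_inDs (x := x) (y := y)) => //.
    exact: (inDs_perm (enum_madd2 _ _ _) h).
  apply: (inDs_perm (enum_madd2' R x y)).
  apply: (swap_inDs (x := x') (y := y') v3 v4 v1 v2 (esym ea) (esym ep) (fun i => esym (et i))).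
  exact: (inDs_perm (enum_madd2 _ _ _) h).
case: H => [[h1 h2 e1 e2]|[h1 h2 e1 e2]|[h1 h2 e1 e2]|[h1 h2 e1 e2]];
  apply: (key _ _ _ _ e1 e2) => //; rewrite /is_arc /is_pole /=; decide_cmp => // i;
  rewrite ?tch_arc ?tch_pole; lia.
Qed.

Lemma inD_valid al be ga D :
  (forall i, 0 < i -> conj be i <= conj ga i + 1) ->
  in_D al be ga D -> valid (enum_mset D).
Proof.
move=> hb [h1 [_ [_ h4]]]; split => // i hi.
have := h4 i hi; have := hb i hi; lia.
Qed.


Lemma perm_swap3 (e e' f' : member) l : perm_eq (e :: e' :: f' :: l) (e' :: f' :: e :: l).
Proof. by apply/permP => p /=; lia. Qed.

Lemma perm_swap2 (e f : member) l : perm_eq (e :: f :: l) (f :: e :: l).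
Proof. by apply/permP => p /=; lia. Qed.

Lemma Xs_pos l : 0 < Xs l -> exists e f l', perm_eq l (e :: f :: l') /\ cr e f.
Proof.
elim: l => [|e l IH] //=.
case: (posnP (count (cr e) l)) => [c0|cp] h.
  have [e' [f' [l' [pl c]]]] : exists e f l', perm_eq l (e :: f :: l') /\ cr e f by apply: IH; lia.
  exists e', f', (e :: l'); split => //.
  by apply: perm_trans (perm_swap3 _ _ _ _); rewrite perm_cons.
have /hasP [f fl cf] : has (cr e) l by rewrite has_count.
exists e, f, (rem f l); split => //.
by rewrite perm_cons; apply: perm_to_rem.
Qed.

Lemma mset_of_perm (D : diagram) e f l :
  perm_eq (enum_mset D) (e :: f :: l) -> D = madd2 (seq_mset l) e f.
Proof.
move=> pl; apply/msetP => z.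
rewrite -count_mem_mset (permP pl) /madd2 !msetE2 !msetnE mset_seqE /=.
by rewrite !(eq_sym _ z); case: (z == e); case: (z == f) => /=; lia.
Qed.

Lemma madd2C (R : diagram) x y : madd2 R x y = madd2 R y x.
Proof. by apply/msetP => z; rewrite /madd2 !msetE2; lia. Qed.

Lemma valid_mem l e : valid l -> e \in l -> is_arc e || is_pole e.
Proof. by case=> /allP h _; apply: h. Qed.

Lemma down_move D : valid (enum_mset D) -> 0 < rk D -> exists E, one_move D E.
Proof.
move=> V /Xs_pos [e [f [l [pl c]]]].
have ve : is_arc e || is_pole e by apply: (valid_mem V); rewrite (perm_mem pl) mem_head.
have vf : is_arc f || is_pole f by apply: (valid_mem V); rewrite (perm_mem pl) !inE eqxx orbT.
rewrite (mset_of_perm pl); clear pl V.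
move: c ve vf; case: e => [[m|] n]; case: f => [[k|] r]; rewrite /cr /is_arc /is_pole /= => c ve vf //.
- case/orP: c => c.
    by eexists; apply: bm_move; apply: bmA; lia.
  by rewrite madd2C; eexists; apply: bm_move; apply: bmA; lia.
- by eexists; apply: bm_move; apply: bmB; lia.
- by rewrite madd2C; eexists; apply: bm_move; apply: bmB; lia.
Qed.

Definition gM (k p : nat) := 'C(k, 2) + k * p.

Lemma count_sub_in (p q : pred member) l :
  (forall x, x \in l -> p x -> q x) -> count p l <= count q l.
Proof.
elim: l => [|x l IH] //= H.
have := IH (fun y hy => H y ltac:(by rewrite inE hy orbT)).
have := H x (mem_head _ _).
move=> hx hl; case px: (p x) hx => hx; case qx: (q x) => /=; try lia.
all: by move: (hx isT).
Qed.

Lemma ap1 e : is_arc e || is_pole e -> is_arc e + is_pole e = 1.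
Proof. by case: e => [[m|] n]; rewrite /is_arc /is_pole /=; [case: (0 < n); case: (n < m) | case: (0 < n)]. Qed.

Lemma size_ap l : all (fun e => is_arc e || is_pole e) l -> size l = count is_arc l + count is_pole l.
Proof.
elim: l => [|e l IH] //= /andP[h1 h2]; rewrite IH //; have := ap1 h1; lia.
Qed.

Lemma pole_cr_arc e f : is_pole e -> is_arc f || is_pole f -> cr e f -> is_arc f.
Proof.
case: e => [[m|] n]; case: f => [[k|] r]; rewrite /cr /is_arc /is_pole //=.
by rewrite orbF.
Qed.

Lemma Xs_le l : all (fun e => is_arc e || is_pole e) l ->
  Xs l <= gM (count is_arc l) (count is_pole l) /\
  (Xs l < gM (count is_arc l) (count is_pole l) ->
   exists e f l', perm_eq l (e :: f :: l') /\ ~~ cr e f /\ is_arc e).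
Proof.
rewrite /gM; elim: l => [|e l IH] //= /andP[ve al].
have [IH1 IH2] := IH al.
have sl := size_ap al.
set k := count is_arc l in IH1 IH2 sl *; set p := count is_pole l in IH1 IH2 sl *.
have binS1 : forall n, 'C(n.+1, 2) = 'C(n, 2) + n by move=> n; rewrite binS bin1.
have [ea|na] := boolP (is_arc e).
  have ep : is_pole e = false by move: ea; case: e ve => [[m|] n] //=.
  rewrite ep /= add0n binS1.
  have c1 : count (cr e) l <= size l by apply: count_size.
  split; first lia.
  move=> hlt.
  case: (ltnP (count (cr e) l) (size l)) => hc.
    have /hasP [f fl cf] : has (predC (cr e)) l.
      by rewrite has_count; move: (count_predC (cr e) l); lia.
    exists e, f, (rem f l); split; last by split.
    by rewrite perm_cons; apply: perm_to_rem.
  have [e' [f' [l' [pl c]]]] : exists e f l', perm_eq l (e :: f :: l') /\ ~~ cr e f /\ is_arc e.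
    by apply: IH2; lia.
  exists e', f', (e :: l'); split => //.
  by apply: perm_trans (perm_swap3 _ _ _ _); rewrite perm_cons.
have ep : is_pole e by move: ve; rewrite (negbTE na).
rewrite ep /= add0n.
have c1 : count (cr e) l <= k.
  apply: count_sub_in => f fl.
  have vf : is_arc f || is_pole f by move/allP: al; apply.
  exact: pole_cr_arc ep vf.
split; first lia.
move=> hlt.
case: (ltnP (count (cr e) l) k) => hc.
  have : 0 < count (fun f => is_arc f && ~~ cr e f) l.
    have : k <= count (cr e) l + count (fun f => is_arc f && ~~ cr e f) l.
      rewrite -count_predUI; apply: (leq_trans _ (leq_addr _ _)).
      by apply: count_sub_in => f _ /= ->; case: (cr e f).
    lia.
  rewrite -has_count => /hasP [f fl /andP [af cf]].
  exists f, e, (rem f l); split; last by rewrite crC.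
  by apply: perm_trans (perm_swap2 _ _ _); rewrite perm_cons; apply: perm_to_rem.
have [e' [f' [l' [pl c]]]] : exists e f l', perm_eq l (e :: f :: l') /\ ~~ cr e f /\ is_arc e.
  by apply: IH2; lia.
exists e', f', (e :: l'); split => //.
by apply: perm_trans (perm_swap3 _ _ _ _); rewrite perm_cons.
Qed.

Lemma valid_dist e f l i : valid (e :: f :: l) -> 0 < i -> touches i e -> ~~ touches i f.
Proof.
move=> [_ h] i0 te; apply/negP => tf.
by have := h i i0; rewrite /= te tf.
Qed.

Lemma up_move D : valid (enum_mset D) ->
  rk D < gM (count is_arc (enum_mset D)) (count is_pole (enum_mset D)) -> exists D', one_move D' D.
Proof.
move=> V hlt.
have [_ /(_ hlt) [e [f [l [pl [c ea]]]]]] := Xs_le (proj1 V).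
have V2 := valid_perm pl V.
have vf : is_arc f || is_pole f by apply: (valid_mem V2); rewrite !inE eqxx orbT.
rewrite (mset_of_perm pl).
move: (fun i => @valid_dist _ _ _ i V2) c ea vf; clear pl V V2 hlt.
case: e => [[m|] n] //; case: f => [[k|] r]; rewrite /cr /is_arc /is_pole /= => H c ea vf //.
- have h1 := H m ltac:(lia) ltac:(by rewrite /touches eqxx).
  have h2 := H n ltac:(lia) ltac:(by rewrite /touches eqxx orbT).
  move: h1 h2; rewrite /touches /= !SomeE => h1 h2.
  have [?|[?|[?|?]]] : (k < m /\ n < r) \/ (k < m /\ k < n) \/ (m < k /\ r < n) \/ (m < k /\ m < r).
    by move: h1 h2 c ea vf; lia.
  + by eexists; apply: bm_move; apply: bmA; lia.
  + by eexists; apply: bm_move; apply: bmC; lia.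
  + by rewrite madd2C; eexists; apply: bm_move; apply: bmA; lia.
  + by rewrite madd2C; eexists; apply: bm_move; apply: bmC; lia.
- have h1 := H m ltac:(lia) ltac:(by rewrite /touches eqxx).
  have h2 := H n ltac:(lia) ltac:(by rewrite /touches eqxx orbT).
  move: h1 h2; rewrite /touches /= => h1 h2.
  have [?|?] : m < r \/ r < n by move: h1 h2 c; lia.
  + by eexists; apply: bm_move; apply: bmD; lia.
  + by eexists; apply: bm_move; apply: bmB; lia.
Qed.


Definition VS (be ga : seq nat) := forall i, 0 < i -> conj be i <= conj ga i + 1.

Lemma rt1n_ct (a b : diagram) : clos_refl_trans_1n diagram one_move a b -> a = b \/ clos_trans diagram one_move a b.
Proof.
elim=> [|x y z hxy hyz [<-|IH]]; first by left.
  by right; apply: t_step.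
by right; apply: t_trans (t_step _ _ _ _ hxy) IH.
Qed.

Lemma ct_rt (a b : diagram) : clos_trans diagram one_move a b -> clos_refl_trans diagram one_move a b.
Proof.
elim=> [x y h|x y z _ h1 _ h2]; first by apply: rt_step.
by apply: rt_trans h1 h2.
Qed.

Lemma ct_rank al be ga E D : VS be ga -> in_D al be ga E ->
  clos_trans diagram one_move E D -> in_D al be ga D /\ rk D < rk E.
Proof.
move=> hb hE h; elim: h hE => [x y h|x y z _ IH1 _ IH2] hx.
  split; first by apply/(move_inD al be ga h).
  by case: (move_drop (inD_valid hb hx) h).
have [hy r1] := IH1 hx; have [hz r2] := IH2 hy; split => //; lia.
Qed.

Lemma rt_rank al be ga E D : VS be ga -> in_D al be ga E ->
  clos_refl_trans diagram one_move E D -> in_D al be ga D /\ (D = E \/ rk D < rk E).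
Proof.
move=> hb hE h0; case: (rt1n_ct (clos_rt_rt1n _ _ _ _ h0)) => [<-|h]; first by split => //; left.
by have [? ?] := ct_rank hb hE h; split => //; right.
Qed.

Definition MM (al : seq nat) := gM (conj al 2) (conj al 1 - conj al 2).

Lemma rk_bound al be ga D : in_D al be ga D -> rk D <= MM al.
Proof.
move=> [h1 [h2 [h3 _]]].
by have [+ _] := Xs_le h1; rewrite /rk /MM h2 h3.
Qed.

Lemma sat_closed al be ga s z : saturated_chain al be ga s -> in_D al be ga z ->
  (forall x, x \in s -> le_arc x z \/ le_arc z x) -> z \in s.
Proof.
move=> [[us [ins cs]] sat] hz hc.
case zs: (z \in s) => //.
have ch : is_chain al be ga (z :: s).
  split; first by rewrite /= zs us.
  split.
    by move=> D; rewrite inE => /orP[/eqP->|]; [|apply: ins].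
  move=> D E; rewrite !inE => /orP[/eqP->|hD] /orP[/eqP->|hE].
  - by left; apply: rt_refl.
  - by case: (hc E hE) => h; [right|left].
  - by apply: hc.
  - by apply: cs.
have := sat _ ch (fun x hx => ltac:(by rewrite inE hx orbT)) z (mem_head _ _).
by rewrite zs.
Qed.

Lemma chain_lt al be ga s x y : VS be ga -> is_chain al be ga s -> x \in s -> y \in s ->
  rk x < rk y -> le_arc x y.
Proof.
move=> hb [us [ins cs]] xs ys hlt.
case: (cs x y xs ys) => // h.
have [_ [e|r]] := rt_rank hb (ins x xs) h; [by subst; lia | lia].
Qed.

Lemma chain_inj al be ga s x y : VS be ga -> is_chain al be ga s -> x \in s -> y \in s ->
  rk x = rk y -> x = y.
Proof.
move=> hb [us [ins cs]] xs ys he.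
case: (cs x y xs ys) => h.
  by have [_ [e|r]] := rt_rank hb (ins y ys) h; [by [] | lia].
by have [_ [e|r]] := rt_rank hb (ins x xs) h; [by [] | lia].
Qed.

Lemma exists_max (s : seq diagram) : s != [::] -> exists2 x, x \in s & forall y, y \in s -> rk y <= rk x.
Proof.
elim: s => [|a s IH] // _.
case: (eqVneq s [::]) => [->|ne].
  by exists a; rewrite ?mem_head // => y; rewrite inE => /eqP->.
have [x xs hx] := IH ne.
case: (leqP (rk a) (rk x)) => h.
  exists x; first by rewrite inE xs orbT.
  by move=> y; rewrite inE => /orP[/eqP->|/hx].
exists a; first by rewrite mem_head.
move=> y; rewrite inE => /orP[/eqP->//|/hx]; lia.
Qed.


Lemma ct_first (a b : diagram) : clos_trans diagram one_move a b ->
  exists c, one_move a c /\ (c = b \/ clos_trans diagram one_move c b).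
Proof.
move=> h0; case: (clos_trans_t1n _ _ _ _ h0) => [y h|y z h1 h2]; first by exists y; split => //; left.
by exists y; split => //; right; apply: clos_t1n_trans.
Qed.

Lemma sat_top al be ga s : VS be ga -> saturated_chain al be ga s -> s != [::] ->
  exists2 x, x \in s & rk x = MM al.
Proof.
move=> hb S ne; have [x0 x0s hx0] := exists_max ne.
have [[us [ins cs]] _] := S.
have b0 := rk_bound (ins x0 x0s).
case: (ltnP (rk x0) (MM al)) => h; last by exists x0 => //; lia.
have [h1 [h2 [h3 _]]] := ins x0 x0s.
have [D' mv] : exists D', one_move D' x0.
  by apply: up_move; [apply: inD_valid hb (ins x0 x0s) | rewrite h2 h3].
have hD' : in_D al be ga D' := proj2 (move_inD al be ga mv) (ins x0 x0s).
have [r _] := move_drop (inD_valid hb hD') mv.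
have : D' \in s.
  apply: (sat_closed S hD') => y ys; left.
  case: (ltnP (rk y) (rk x0)) => hy.
    exact: rt_trans (rt_step _ _ _ _ mv) (chain_lt hb (proj1 S) ys x0s hy).
  have -> : y = x0 by apply: (chain_inj hb (proj1 S)) => //; have := hx0 y ys; lia.
  exact: rt_step.
by move/hx0; lia.
Qed.

Lemma sat_down al be ga s y : VS be ga -> saturated_chain al be ga s -> y \in s -> 0 < rk y ->
  exists2 z, z \in s & rk z + 1 = rk y.
Proof.
move=> hb S ys hy.
have [[us [ins cs]] _] := S.
have C := proj1 S.
case: (boolP (has (fun z => rk z + 1 == rk y) s)) => [/hasP [z zs /eqP hz]|/hasPn H].
  by exists z.
exfalso.
set L := [seq z <- s | rk z < rk y].
have hyD := ins y ys.
case: (eqVneq L [::]) => [L0|Lne].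
  have nL : forall w, w \in s -> rk y <= rk w.
    move=> w ws; case: (ltnP (rk w) (rk y)) => // hw.
    have wL : w \in L by rewrite mem_filter hw ws.
    by rewrite L0 in wL.
  have [E mv] := down_move (inD_valid hb hyD) hy.
  have hE : in_D al be ga E by apply/(move_inD al be ga mv).
  have [r _] := move_drop (inD_valid hb hyD) mv.
  have : E \in s.
    apply: (sat_closed S hE) => w ws; right.
    case: (ltnP (rk y) (rk w)) => hw.
      exact: rt_trans (chain_lt hb C ys ws hw) (rt_step _ _ _ _ mv).
    have -> : w = y by apply: (chain_inj hb C) => //; have := nL w ws; lia.
    exact: rt_step.
  by move/nL; lia.
have [x xL hx] := exists_max Lne.
move: (xL); rewrite mem_filter => /andP [xy xs].
have hxn := H x xs; rewrite /= in hxn.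
have xy2 : rk x + 1 < rk y by move: hxn => /eqP; lia.
have lxy := chain_lt hb C xs ys xy.
have [E [mv ct]] : exists E, one_move y E /\ clos_trans diagram one_move E x.
  case: (rt1n_ct (clos_rt_rt1n _ _ _ _ lxy)) => [e0|c0]; first by subst; lia.
  have [E1 [h1 [e1|c1]]] := ct_first c0.
    subst E1.
    have [_ R] := move_drop (inD_valid hb hyD) h1.
    exact: R.
  by exists E1.
have hE : in_D al be ga E by apply/(move_inD al be ga mv).
have [r1 _] := move_drop (inD_valid hb hyD) mv.
have [_ r2] := ct_rank hb hE ct.
have : E \in s.
  apply: (sat_closed S hE) => w ws.
  case: (ltnP (rk w) (rk y)) => hw.
    left.
    have wL : w \in L by rewrite mem_filter hw ws.
    have := hx w wL => hwx.
    case: (ltnP (rk w) (rk x)) => hwx2.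
      exact: rt_trans (ct_rt ct) (chain_lt hb C ws xs hwx2).
    have -> : w = x by apply: (chain_inj hb C) => //; lia.
    exact: ct_rt.
  right.
  case: (ltnP (rk y) (rk w)) => hw2.
    exact: rt_trans (chain_lt hb C ys ws hw2) (rt_step _ _ _ _ mv).
  have -> : w = y by apply: (chain_inj hb C) => //; lia.
  exact: rt_step.
move=> Es.
have EL : E \in L by rewrite mem_filter r1 Es.
have := hx E EL; lia.
Qed.

Lemma sat_all al be ga s : VS be ga -> saturated_chain al be ga s -> s != [::] ->
  forall j, j <= MM al -> exists2 x, x \in s & rk x = j.
Proof.
move=> hb S ne.
have [t ts ht] := sat_top hb S ne.
suff : forall k, k <= MM al -> exists2 x, x \in s & rk x = MM al - k.
  by move=> H j hj; have [x xs hx] := H (MM al - j) (leq_subr _ _); exists x => //; lia.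
elim=> [|k IH] hk; first by exists t => //; lia.
have [x xs hx] := IH (ltnW hk).
have [z zs hz] := sat_down hb S xs ltac:(lia).
by exists z => //; lia.
Qed.

Lemma sat_size al be ga s : VS be ga -> saturated_chain al be ga s -> s != [::] ->
  size s = (MM al).+1.
Proof.
move=> hb S ne.
have [[us [ins cs]] _] := S.
have C := proj1 S.
have U : uniq (map rk s).
  rewrite map_inj_in_uniq // => x y xs ys; exact: chain_inj hb C xs ys.
have P : perm_eq (map rk s) (iota 0 (MM al).+1).
  apply: uniq_perm => //; first exact: iota_uniq.
  move=> j; rewrite mem_iota add0n; apply/idP/idP.
    by case/mapP => x xs ->; have := rk_bound (ins x xs); lia.
  move=> hj; have [x xs hx] := sat_all hb S ne (j := j) ltac:(lia).
  by apply/mapP; exists x.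
by rewrite -(size_map rk) (perm_size P) size_iota.
Qed.

Theorem mainTheorem1 (al be ga : seq nat) :
  is_partition al -> is_partition be -> is_partition ga ->
  all (fun x => x <= 2) al ->
  (forall i, 0 < i -> conj be i <= conj ga i + 1) ->
  forall s t : seq diagram,
    saturated_chain al be ga s -> saturated_chain al be ga t ->
    (size s).-1 = (size t).-1.
Proof.
move=> _ _ _ _ hb s t Ss St.
have emp : forall u v, saturated_chain al be ga u -> saturated_chain al be ga v ->
    u = [::] -> v = [::].
  move=> u v Su Sv eu; subst u; case: v Sv => [//|x v] Sv.
  have hx : in_D al be ga x by apply: (proj1 (proj2 (proj1 Sv))); rewrite mem_head.
  by have := sat_closed Su hx (fun y (hy : y \in [::]) => ltac:(by [])).
case: (eqVneq s [::]) => [e|ns].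
  by rewrite e (emp _ _ Ss St e).
case: (eqVneq t [::]) => [e|nt].
  by move: ns; rewrite (emp _ _ St Ss e).
by rewrite (sat_size hb Ss ns) (sat_size hb St nt).
Qed.
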